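(* Let $n\in\mathbb{N}$, $A_1,\dots,A_n\in\mathscr{Q}$ and $\mathcal{A}=\{A_1,\dots,A_n\}$. Then for every $P_1\in\mathrm{Posi}(\mathcal{A})$ there exists $P_2\in\mathrm{Posi}'(A_1,\dots,A_n)$ with $P_2\subseteq P_1$.
   Context: Let $\mathcal{X}$ be a nonempty set and let $\mathscr{V}$ be the real vector space of all functions $u:\mathcal{X}\to\mathbb{R}$, with pointwise operations. Let $\mathscr{Q}$ be the set of all finite subsets of $\mathscr{V}$ (including $\emptyset$). For a positive integer $n$, $\mathbb{R}^{n,+}=\{\boldsymbol\lambda\in\mathbb{R}^n:\lambda_j\ge0\ \forall j,\ \sum_j\lambda_j>0\}$, and for $\boldsymbol\lambda\in\mathbb{R}^n$, $\mathbf u=(u_1,\dots,u_n)\in\mathscr{V}^n$, $\boldsymbol\lambda\mathbf u=\sum_{j=1}^n\lambda_ju_j$. $\mathbb{N}$ denotes the positive integers. For $\mathcal{A}\subseteq\mathscr{Q}$: $\mathrm{Posi}(\mathcal{A})=\{\{\boldsymbol\lambda(\mathbf u)\mathbf u:\mathbf u\in\times_{k=1}^mB_k\}: m\in\mathbb{N},\ B_1,\dots,B_m\in\mathcal A,\ \boldsymbol\lambda:\times_{k=1}^mB_k\to\mathbb{R}^{m,+}\}$. For a finite sequence $A_1,\dots,A_n\in\mathscr{Q}$ ($n\in\mathbb{N}$): $\mathrm{Posi}'(A_1,\dots,A_n)=\{\{\boldsymbol\lambda(\mathbf u)\mathbf u:\mathbf u\in\times_{j=1}^nA_j\}:\ \boldsymbol\lambda:\times_{j=1}^nA_j\to\mathbb{R}^{n,+}\}$.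 *)

(* Defs.v *)
From HB Require Import structures.
From mathcomp Require Import all_boot all_order all_algebra.
From mathcomp Require Import boolp classical_sets functions cardinality.
From Stdlib Require Import Rdefinitions.
From mathcomp Require Import Rstruct.
Set Implicit Arguments. Unset Strict Implicit. Unset Printing Implicit Defensive.
Import Order.TTheory GRing.Theory Num.Theory.
Local Open Scope classical_set_scope.
Local Open Scope ring_scope.

Definition Vsp (X : Type) := X -> R.

Definition lincomb (X : Type) (m : nat) (lam : 'I_m -> R) (u : 'I_m -> Vsp X)
  : Vsp X := fun x => \sum_(j < m) lam j * u j x.

Definition posvec (m : nat) (lam : 'I_m -> R) : Prop :=
  (forall j, 0 <= lam j) /\ 0 < \sum_(j < m) lam j.

Definition in_prod (X : Type) (m : nat) (B : 'I_m -> set (Vsp X))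
  (u : 'I_m -> Vsp X) : Prop := forall k, B k (u k).

Definition posi_img (X : Type) (m : nat) (B : 'I_m -> set (Vsp X))
  (lam : ('I_m -> Vsp X) -> 'I_m -> R) : set (Vsp X) :=
  [set v | exists u, in_prod B u /\ v = lincomb (lam u) u].

(* the map lambda : x_k B_k -> R^{m,+} (only its values on the product matter) *)
Definition admissible (X : Type) (m : nat) (B : 'I_m -> set (Vsp X))
  (lam : ('I_m -> Vsp X) -> 'I_m -> R) : Prop :=
  forall u, in_prod B u -> posvec (lam u).

Definition Qset (X : Type) : set (set (Vsp X)) := [set A | finite_set A].

Definition Posi (X : Type) (Acal : set (set (Vsp X))) : set (set (Vsp X)) :=
  [set P | exists (m : nat) (B : 'I_m -> set (Vsp X)),
     (0 < m)%nat /\ (forall k, Acal (B k)) /\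
     exists lam, admissible B lam /\ P = posi_img B lam].

Definition Posi' (X : Type) (n : nat) (A : 'I_n -> set (Vsp X)) : set (set (Vsp X)) :=
  [set P | exists lam, admissible A lam /\ P = posi_img A lam].

(* Main.v *)
Require Import Defs.
From HB Require Import structures.
From mathcomp Require Import all_boot all_order all_algebra.
From mathcomp Require Import boolp classical_sets functions cardinality.
From mathcomp Require Import Rstruct.
Local Open Scope classical_set_scope.
Import GRing.Theory Num.Theory.

Theorem mainTheorem18 (X : Type) (hX : inhabited X) (n : nat) (hn : (0 < n)%nat)
  (A : 'I_n -> set (Vsp X)) (hA : forall j, @Qset X (A j)) :
  forall P1, Posi (range A) P1 ->
  exists P2, Posi' A P2 /\ P2 `<=` P1.
Proof.
move=> P1 [m [B [hm [hB [lam [adm ->]]]]]].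
have hs : forall k, exists j, A j = B k by move=> k; case: (hB k) => j _ e; exists j.
case: (choice hs) => s hsB.
pose W (u : 'I_n -> Vsp X) := fun k => u (s k).
pose lam' (u : 'I_n -> Vsp X) (j : 'I_n) :=
  (\sum_(k < m | s k == j) lam (W u) k)%R.
exists (posi_img A lam'); split.
  exists lam'; split => // u hu.
  have hw : in_prod B (W u) by move=> k; rewrite -hsB; apply: hu.
  case: (adm _ hw) => h0 hpos; split.
    by move=> j; apply: sumr_ge0 => k _; apply: h0.
  by rewrite (partition_big s xpredT) //= in hpos.
move=> v [u [hu ->]].
have hw : in_prod B (W u) by move=> k; rewrite -hsB; apply: hu.
exists (W u); split => //.
apply: funext => x; rewrite /lincomb.
symmetry; rewrite (partition_big s xpredT) //.
apply: eq_bigr => j _; rewrite /lam' mulr_suml.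
by apply: eq_big => [k|k /eqP <-].
Qed.
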